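(* Let $B\colon\mathbb R^{2m}\to\mathbb R^{2m}$ be a linear map with no real eigenvalues, and consider the nondegenerate line fibration of $\mathbb R^{2m+1}$ it generates. This fibration corresponds to a (continuous) great circle fibration of $S^{2m+1}$ if and only if $B$ is invariant on planes.
   Context: Write $\mathbb R^{2m+1}=\mathbb R^{2m}\times\mathbb R$; $B$ generates the family of oriented lines $\{(y+tB(y),\,t):t\in\mathbb R\}$, $y\in\mathbb R^{2m}$, which is a smooth nondegenerate line fibration of $\mathbb R^{2m+1}$ since $B$ has no real eigenvalues. Identify $\mathbb R^{2m+1}$ with the hyperplane $\{x_{2m+2}=1\}\subset\mathbb R^{2m+2}$ tangent to $S^{2m+1}$ at the north pole; each line $\ell$ of the fibration determines the great circle $S^{2m+1}\cap\alpha(\ell)$, where $\alpha(\ell)$ is the linear span of $\ell\times\{1\}$. The fibration corresponds to a great circle fibration if there exists a continuous fibration of $S^{2m+1}$ by oriented great circles whose fibers meeting the open upper hemisphere $\{x_{2m+2}>0\}$ are exactly these great circles. A linear map $B$ with no real eigenvalues is invariant on planes if $B^2(u)\in\mathrm{Span}\{u,B(u)\}$ for every nonzero $u\in\mathbb R^{2m}$. *)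

(* Defs.v *)
(* Vectors are row vectors 'rV[R]_n,
   a linear map B : R^n -> R^n is a matrix acting on the right: u |-> u *m B. *)
From HB Require Import structures.
From mathcomp Require Import all_boot all_order all_algebra.
From mathcomp Require Import all_classical all_reals all_analysis.
Set Implicit Arguments. Unset Strict Implicit. Unset Printing Implicit Defensive.
Import Order.TTheory GRing.Theory Num.Theory.
Import numFieldNormedType.Exports.
Local Open Scope classical_set_scope.
Local Open Scope ring_scope.

Section GreatCircles.
Variable R : realType.

Definition dotv (N : nat) (u v : 'rV[R]_N) : R := (u *m v^T) 0 0.

Definition sphere (N : nat) : set 'rV[R]_N := [set x | dotv x x = 1].

Definition orthonormal (N : nat) (u v : 'rV[R]_N) : Prop :=
  [/\ dotv u u = 1, dotv v v = 1 & dotv u v = 0].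

(* the bivector u /\ v, encoding the oriented 2-plane spanned by (u, v) *)
Definition bivec (N : nat) (u v : 'rV[R]_N) : 'M[R]_N := u^T *m v - v^T *m u.

(* an oriented great circle of S^{N-1}, encoded by the unit bivector of its
   oriented plane: u /\ v for an orthonormal (positively oriented) pair (u,v) *)
Definition is_ogc (N : nat) (J : 'M[R]_N) : Prop :=
  exists u v : 'rV[R]_N, orthonormal u v /\ J = bivec u v.

Definition ogc_points (N : nat) (J : 'M[R]_N) : set 'rV[R]_N :=
  [set x | exists (u v : 'rV[R]_N) (t : R),
      orthonormal u v /\ J = bivec u v /\ x = cos t *: u + sin t *: v].

(* A continuous fibration of S^{N-1} by oriented great circles, given by the
   map Phi sending each point x of the sphere to the oriented great circle
   (fiber) through x: Phi is continuous on the sphere, x lies on Phi x, and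
   any point y on the fiber Phi x has the same fiber. *)
Definition great_circle_fibration (N : nat) (Phi : 'rV[R]_N -> 'M[R]_N) : Prop :=
  [/\ {within @sphere N, continuous Phi},
      (forall x, sphere x -> is_ogc (Phi x) /\ ogc_points (Phi x) x) &
      (forall x y, sphere x -> ogc_points (Phi x) y -> Phi y = Phi x)].

Definition lastc (n : nat) (x : 'rV[R]_(n + 1)) : R := rsubmx x 0 0.

Definition upper (n : nat) (x : 'rV[R]_(n + 1)) : Prop := 0 < lastc x.

(* J and K are positive multiples: they encode the same oriented 2-plane *)
Definition same_oplane (N : nat) (J K : 'M[R]_N) : Prop :=
  exists c : R, 0 < c /\ J = c *: K.

(* The line l_y = {(y + t B(y), t) : t in R} of R^{n+1}, placed in the
   hyperplane x_{n+2} = 1 of R^{n+2}: its points are p + t d with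
   p = (y, 0, 1) and d = (B y, 1, 0).  The oriented plane alpha(l_y)
   (oriented by increasing t) is encoded by the bivector p /\ d. *)
Definition line_pt (n : nat) (y : 'rV[R]_n) : 'rV[R]_(n + 1 + 1) :=
  row_mx (row_mx y 0) (const_mx 1).
Definition line_dir (n : nat) (B : 'M[R]_n) (y : 'rV[R]_n) : 'rV[R]_(n + 1 + 1) :=
  row_mx (row_mx (y *m B) (const_mx 1)) 0.
Definition line_biv (n : nat) (B : 'M[R]_n) (y : 'rV[R]_n) : 'M[R]_(n + 1 + 1) :=
  bivec (line_pt y) (line_dir B y).

(* The line fibration generated by B corresponds to a great circle fibration
   of S^{n+1}: there is a continuous great circle fibration whose fibers
   meeting the open upper hemisphere are exactly the oriented great circles
   S^{n+1} /\ alpha(l_y), y in R^n. *)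
Definition corresponds_to_gcf (n : nat) (B : 'M[R]_n) : Prop :=
  exists Phi : 'rV[R]_(n + 1 + 1) -> 'M[R]_(n + 1 + 1),
    [/\ great_circle_fibration Phi,
        (forall x, sphere x ->
           (exists z, ogc_points (Phi x) z /\ upper z) ->
           exists y : 'rV[R]_n, same_oplane (Phi x) (line_biv B y)) &
        (forall y : 'rV[R]_n, exists x, [/\ sphere x,
           (exists z, ogc_points (Phi x) z /\ upper z) &
           same_oplane (Phi x) (line_biv B y)])].

Definition no_real_eigenvalue (n : nat) (B : 'M[R]_n) : Prop :=
  forall a : R, ~ eigenvalue B a.

Definition invariant_on_planes (n : nat) (B : 'M[R]_n) : Prop :=
  forall u : 'rV[R]_n, u != 0 -> (u *m B *m B <= col_mx u (u *m B))%MS.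

End GreatCircles.

(* Main.v *)
Require Import Defs.
From HB Require Import structures.
From mathcomp Require Import all_boot all_order all_algebra.
From mathcomp Require Import all_classical all_reals all_analysis.
From mathcomp.algebra_tactics Require Import ring lra.
Require Import Defs.
Import Order.TTheory GRing.Theory Num.Theory.
Import numFieldNormedType.Exports.
Set Implicit Arguments. Unset Strict Implicit. Unset Printing Implicit Defensive.
Local Open Scope classical_set_scope.
Local Open Scope ring_scope.
Section Cvg.
Variable R : realType.
Context {T : Type} (F : set_system T) {FF : Filter F}.

Lemma cvg_mxP m n (f : T -> 'M[R]_(m,n)) (A : 'M[R]_(m,n)) :
  (forall i j, (fun t => f t i j) @ F --> A i j) -> f @ F --> A.
Proof.
move=> H; apply/cvg_mx_entourageP => E entE.
apply: filter_forall => i; apply: filter_forall => j.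
have := (iffLR (cvg_entourageP _ _) (H i j)) E entE.
move=> /(_ (fmap_filter _ _)) HH.
near=> t; rewrite inE; near: t; exact: HH.
Unshelve. all: by end_near. Qed.

Lemma cvg_mx_entry m n (f : T -> 'M[R]_(m,n)) (A : 'M[R]_(m,n)) i j :
  f @ F --> A -> (fun t => f t i j) @ F --> A i j.
Proof. move=> H; exact: (@continuous_cvg T _ _ F FF f (fun M : 'M[R]_(m,n) => M i j) A (@coord_continuous R m n i j A) H). Qed.

Lemma cvg_bigsum (I : Type) (r : seq I) (f : I -> T -> R) (a : I -> R) :
  (forall i, f i @ F --> a i) ->
  (fun t => \sum_(i <- r) f i t) @ F --> \sum_(i <- r) a i.
Proof.
move=> H; elim: r => [|i r IH].
  under eq_fun do rewrite big_nil. rewrite big_nil; exact: cvg_cst.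
under eq_fun do rewrite big_cons. rewrite big_cons; exact: cvgD.
Qed.

Lemma cvg_mulmx m n p (f : T -> 'M[R]_(m,n)) (g : T -> 'M[R]_(n,p)) (A : 'M[R]_(m,n)) (B : 'M[R]_(n,p)) :
  f @ F --> A -> g @ F --> B -> (fun t => f t *m g t) @ F --> A *m B.
Proof.
move=> Hf Hg; apply: cvg_mxP => i j.
under eq_fun do rewrite mxE. rewrite mxE.
apply: cvg_bigsum => k; apply: cvgM; exact: cvg_mx_entry.
Qed.

Lemma cvg_trmx m n (f : T -> 'M[R]_(m,n)) (A : 'M[R]_(m,n)) :
  f @ F --> A -> (fun t => (f t)^T) @ F --> A^T.
Proof.
move=> Hf; apply: cvg_mxP => i j.
under eq_fun do rewrite mxE. rewrite mxE. exact: cvg_mx_entry.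
Qed.

Lemma cvg_dotv N (f g : T -> 'rV[R]_N) (a b : 'rV[R]_N) :
  f @ F --> a -> g @ F --> b -> (fun t => dotv (f t) (g t)) @ F --> dotv a b.
Proof.
move=> Hf Hg; rewrite /dotv.
have H1 := cvg_mulmx Hf (cvg_trmx Hg).
exact: (cvg_mx_entry H1).
Qed.

Lemma cvg_bivec N (f g : T -> 'rV[R]_N) (a b : 'rV[R]_N) :
  f @ F --> a -> g @ F --> b -> (fun t => bivec (f t) (g t)) @ F --> bivec a b.
Proof.
move=> Hf Hg; rewrite /bivec; apply: cvgB; apply: cvg_mulmx => //; exact: cvg_trmx.
Qed.

End Cvg.
Section Alg.
Variable R : realType.
Variable N : nat.
Implicit Types (u v w a b y z : 'rV[R]_N).

Lemma dotvE u v : dotv u v = \sum_i u 0 i * v 0 i.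
Proof. by rewrite /dotv !mxE; apply: eq_bigr => i _; rewrite mxE. Qed.

Lemma dotvC u v : dotv u v = dotv v u.
Proof. by rewrite !dotvE; apply: eq_bigr => i _; rewrite mulrC. Qed.

Lemma dotvDl u v w : dotv (u + v) w = dotv u w + dotv v w.
Proof. by rewrite !dotvE -big_split; apply: eq_bigr => i _; rewrite mxE mulrDl. Qed.

Lemma dotvZl c u w : dotv (c *: u) w = c * dotv u w.
Proof. by rewrite !dotvE mulr_sumr; apply: eq_bigr => i _; rewrite mxE mulrA. Qed.

Lemma dotvNl u w : dotv (- u) w = - dotv u w.
Proof. by rewrite -scaleN1r dotvZl mulN1r. Qed.

Lemma dotvBl u v w : dotv (u - v) w = dotv u w - dotv v w.
Proof. by rewrite dotvDl dotvNl. Qed.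

Lemma dotvDr u v w : dotv w (u + v) = dotv w u + dotv w v.
Proof. by rewrite !(dotvC w) dotvDl. Qed.

Lemma dotvZr c u w : dotv w (c *: u) = c * dotv w u.
Proof. by rewrite !(dotvC w) dotvZl. Qed.

Lemma dotvNr u w : dotv w (- u) = - dotv w u.
Proof. by rewrite !(dotvC w) dotvNl. Qed.

Lemma dotvBr u v w : dotv w (u - v) = dotv w u - dotv w v.
Proof. by rewrite !(dotvC w) dotvBl. Qed.

Lemma dotv0l w : dotv 0 w = 0.
Proof. by rewrite -(scale0r (0 : 'rV[R]_N)) dotvZl mul0r. Qed.

Lemma dotv_ge0 u : 0 <= dotv u u.
Proof. by rewrite dotvE; apply: sumr_ge0 => i _; rewrite -expr2 sqr_ge0. Qed.

Lemma dotv_eq0 u : dotv u u = 0 -> u = 0.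
Proof.
rewrite dotvE => /psumr_eq0P H; apply/rowP => i; rewrite mxE.
have : u 0 i * u 0 i = 0 by apply: H => // j _; rewrite -expr2 sqr_ge0.
by move/eqP; rewrite mulf_eq0 orbb => /eqP.
Qed.

Lemma dotv_gt0 u : u != 0 -> 0 < dotv u u.
Proof.
move=> u0; rewrite lt_def dotv_ge0 andbT; apply/eqP => /dotv_eq0 H.
by rewrite H eqxx in u0.
Qed.

Lemma mulmx_tr u v : u *m v^T = (dotv u v)%:M.
Proof. by rewrite {1}[u *m v^T]mx11_scalar. Qed.

Lemma bivec_act z a b : z *m bivec a b = dotv z a *: b - dotv z b *: a.
Proof. by rewrite /bivec mulmxBr !mulmxA !mulmx_tr !mul_scalar_mx. Qed.

Lemma bivec_entry a b i j : bivec a b i j = a 0 i * b 0 j - b 0 i * a 0 j.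
Proof. by rewrite /bivec !mxE !big_ord1 !mxE. Qed.

Lemma bivecDl a a' b : bivec (a + a') b = bivec a b + bivec a' b.
Proof. by apply/matrixP => i j; rewrite [in RHS]mxE !bivec_entry !mxE; ring. Qed.

Lemma bivecDr a b b' : bivec a (b + b') = bivec a b + bivec a b'.
Proof. by apply/matrixP => i j; rewrite [in RHS]mxE !bivec_entry !mxE; ring. Qed.

Lemma bivecZl c a b : bivec (c *: a) b = c *: bivec a b.
Proof. by apply/matrixP => i j; rewrite [in RHS]mxE !bivec_entry !mxE; ring. Qed.

Lemma bivecZr c a b : bivec a (c *: b) = c *: bivec a b.
Proof. by apply/matrixP => i j; rewrite [in RHS]mxE !bivec_entry !mxE; ring. Qed.

Lemma bivecNr a b : bivec a (- b) = - bivec a b.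
Proof. by apply/matrixP => i j; rewrite [in RHS]mxE !bivec_entry !mxE; ring. Qed.

Lemma bivecNl a b : bivec (- a) b = - bivec a b.
Proof. by apply/matrixP => i j; rewrite [in RHS]mxE !bivec_entry !mxE; ring. Qed.

Lemma bivecC a b : bivec b a = - bivec a b.
Proof. by apply/matrixP => i j; rewrite [in RHS]mxE !bivec_entry; ring. Qed.

Lemma bivec_xx a : bivec a a = 0.
Proof. by apply/matrixP => i j; rewrite [in RHS]mxE !bivec_entry; ring. Qed.

Lemma tr_trmul a b : \tr (a^T *m b) = dotv a b.
Proof. by rewrite mxtrace_mulC mulmx_tr mxtrace_scalar mulr1n dotvC. Qed.

Lemma bivec_sq a b : bivec a b *m bivec a b =
  a^T *m (dotv b a *: b - dotv b b *: a) - b^T *m (dotv a a *: b - dotv a b *: a).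
Proof. by rewrite {1}/bivec mulmxBl -!mulmxA !bivec_act. Qed.

Lemma tr_bivec_sq a b :
  \tr (bivec a b *m bivec a b) = 2 * (dotv a b)^+2 - 2 * dotv a a * dotv b b.
Proof.
rewrite bivec_sq !mulmxBr -!scalemxAr !raddfB /= !mxtraceZ !tr_trmul.
rewrite (dotvC b a); ring.
Qed.

End Alg.
Section Alg2.
Variable R : realType.
Variable N : nat.
Implicit Types (u v w a b y z : 'rV[R]_N).

Definition nrm z := Num.sqrt (dotv z z).
Definition unitv z := (nrm z)^-1 *: z.

Lemma nrm_sq z : nrm z ^+ 2 = dotv z z.
Proof. by rewrite /nrm sqr_sqrtr // dotv_ge0. Qed.

Lemma nrm_gt0 z : z != 0 -> 0 < nrm z.
Proof. by move=> z0; rewrite /nrm sqrtr_gt0 dotv_gt0. Qed.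

Lemma dotv_unitv z : z != 0 -> dotv (unitv z) (unitv z) = 1.
Proof.
move=> z0; have n0 := nrm_gt0 z0.
rewrite /unitv dotvZl dotvZr -nrm_sq; field; exact: lt0r_neq0.
Qed.

Lemma unitv_neq0 z : z != 0 -> unitv z != 0.
Proof.
move=> z0; rewrite /unitv scaler_eq0 negb_or z0 andbT invr_eq0.
exact: lt0r_neq0 (nrm_gt0 z0).
Qed.

Lemma unitvZ c z : 0 < c -> unitv (c *: z) = unitv z.
Proof.
move=> c0; have [->|z0] := eqVneq z 0; first by rewrite !scaler0.
have n0 := nrm_gt0 z0; rewrite /nrm in n0.
rewrite /unitv /nrm dotvZl dotvZr mulrA sqrtrM ?mulr_ge0 ?ltW //.
rewrite -expr2 sqrtr_sqr gtr0_norm // scalerA; congr (_ *: _).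
field; apply/andP; split; exact: lt0r_neq0.
Qed.

Lemma orth_biv_tr u v : orthonormal u v -> \tr (bivec u v *m bivec u v) = -2.
Proof. by case=> uu vv uv; rewrite tr_bivec_sq uu vv uv; ring. Qed.

Lemma orth_biv_neq0 u v : orthonormal u v -> bivec u v != 0.
Proof.
move=> H; apply/eqP => E; have := orth_biv_tr H; rewrite E mul0mx mxtrace0.
by move/eqP; rewrite eq_sym oppr_eq0 pnatr_eq0.
Qed.

Lemma biv_pos_eq u v u' v' c : orthonormal u v -> orthonormal u' v' ->
  bivec u v = c *: bivec u' v' -> 0 < c -> bivec u v = bivec u' v'.
Proof.
move=> H H' E c0; have := orth_biv_tr H.
rewrite E -scalemxAl -scalemxAr !mxtraceZ orth_biv_tr // => h.
have -> : c = 1 by nra.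
by rewrite scale1r.
Qed.

Lemma act_orth u v z : orthonormal u v ->
  z *m bivec u v *m bivec u v = -(dotv z u *: u + dotv z v *: v).
Proof.
case=> uu vv uv; rewrite [z *m _]bivec_act mulmxBl -!scalemxAl !bivec_act uu vv uv (dotvC v u) uv.
by apply/rowP => i; rewrite !mxE; ring.
Qed.

Lemma ogc_MM u v t : orthonormal u v ->
  (cos t *: u + sin t *: v) *m bivec u v *m bivec u v = - (cos t *: u + sin t *: v).
Proof.
move=> H; rewrite act_orth //; case: H => uu vv uv.
rewrite !dotvDl !dotvZl uu vv uv (dotvC v u) uv.
by apply/rowP => i; rewrite !mxE; ring.
Qed.

Lemma ogc_span u v u' v' y : orthonormal u v -> orthonormal u' v' ->
  bivec u v = bivec u' v' -> (exists t, y = cos t *: u + sin t *: v) ->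
  y = dotv y u' *: u' + dotv y v' *: v'.
Proof.
move=> H H' E [t Hy]; have := ogc_MM t H; rewrite -Hy E act_orth //.
by move/oppr_inj.
Qed.

Lemma angle (al be : R) : al ^+ 2 + be ^+ 2 = 1 ->
  exists t, cos t = al /\ sin t = be.
Proof.
move=> h; have ha : -1 <= al <= 1 by apply/andP; split; nra.
have c := acosK; have ha' : al \in `[-1, 1] by rewrite in_itv /=.
have s := sin_acos ha.
have e : 1 - al ^+ 2 = be ^+ 2 by lra.
rewrite e sqrtr_sqr in s.
case: (leP 0 be) => hb.
  by exists (acos al); split; [exact: c | rewrite s ger0_norm].
exists (- acos al); rewrite cosN sinN; split; first exact: c.
by rewrite s ltr0_norm // opprK.
Qed.

Lemma ogc_of_span u0 v0 z : orthonormal u0 v0 -> dotv z z = 1 ->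
  z = dotv z u0 *: u0 + dotv z v0 *: v0 -> ogc_points (bivec u0 v0) z.
Proof.
move=> H zz Ez.
have e : (dotv z u0) ^+ 2 + (dotv z v0) ^+ 2 = 1.
  by rewrite -zz {4}Ez dotvDr !dotvZr -!expr2.
have [t [ct st]] := angle e.
by exists u0, v0, t; split => //; split => //; rewrite ct st.
Qed.

Lemma aNN a b : a *m bivec a b *m bivec a b =
  - (dotv a a * dotv b b - dotv a b ^+ 2) *: a.
Proof.
rewrite [a *m _]bivec_act mulmxBl -!scalemxAl !bivec_act (dotvC b a).
by apply/rowP => i; rewrite !mxE; ring.
Qed.

Lemma span_from_biv u0 v0 a b c : orthonormal u0 v0 ->
  bivec u0 v0 = c *: bivec a b -> a != 0 -> ogc_points (bivec u0 v0) (unitv a).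
Proof.
move=> H E a0.
have trM := orth_biv_tr H.
rewrite E -scalemxAl -scalemxAr !mxtraceZ tr_bivec_sq in trM.
have aMM : a *m bivec u0 v0 *m bivec u0 v0 = - a.
  rewrite E -!scalemxAr -scalemxAl aNN !scalerA.
  have -> : c * c * - (dotv a a * dotv b b - dotv a b ^+ 2) = -1 by nra.
  by rewrite scaleN1r.
rewrite act_orth // in aMM; move/oppr_inj: aMM => Pa.
apply: ogc_of_span => //; first exact: dotv_unitv.
by rewrite /unitv !dotvZl -!scalerA -scalerDr Pa.
Qed.

End Alg2.
Section Cvg2.
Variable R : realType.
Context {T : Type} (F : set_system T) {FF : Filter F}.

Lemma cvg_nrm N (f : T -> 'rV[R]_N) (a : 'rV[R]_N) :
  f @ F --> a -> (fun t => nrm (f t)) @ F --> nrm a.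
Proof.
move=> Hf; rewrite /nrm.
exact: (@continuous_cvg T _ _ F FF (fun t => dotv (f t) (f t)) (@Num.sqrt R) (dotv a a)
  (@sqrt_continuous R _) (cvg_dotv Hf Hf)).
Qed.

Lemma cvg_unitv N (f : T -> 'rV[R]_N) (a : 'rV[R]_N) : a != 0 ->
  f @ F --> a -> (fun t => unitv (f t)) @ F --> unitv a.
Proof.
move=> a0 Hf; rewrite /unitv; apply: cvgZ => //.
apply: cvgV; first exact: lt0r_neq0 (nrm_gt0 a0).
exact: cvg_nrm.
Qed.

End Cvg2.
Lemma orth_comp (R : realType) N (u w : 'rV[R]_N) : dotv u u = 1 -> dotv u (w - dotv w u *: u) = 0.
Proof. by move=> H; rewrite dotvBr dotvZr H mulr1 dotvC subrr. Qed.

Section KPhi.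
Variable R : realType.
Variable n : nat.
Variable B : 'M[R]_n.
Variables a b : R.
Hypothesis Hq : forall u : 'rV[R]_n, u *m B *m B = a *: u + b *: (u *m B).
Hypothesis disc : b ^+ 2 + 4 * a < 0.
Local Notation V := ('rV[R]_(n + 1 + 1)).
Implicit Types (x y z p : V).

Definition Kmx : 'M[R]_(n + 1 + 1) :=
  block_mx (block_mx B 0 0 (b%:M)) (col_mx 0 (a%:M)) (row_mx 0 (1%:M)) 0.

Definition vec (y : 'rV[R]_n) (s t : R) : V := row_mx (row_mx y s%:M) t%:M.

Lemma sc_add (s t : R) : (s + t)%:M = s%:M + t%:M :> 'M[R]_1.
Proof. by apply/rowP => i; rewrite ord1 !mxE eqxx !mulr1n. Qed.

Lemma vec_split x : x = vec (lsubmx (lsubmx x)) (rsubmx (lsubmx x) 0 0) (rsubmx x 0 0).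
Proof. by rewrite /vec -!mx11_scalar !hsubmxK. Qed.

Lemma mulK (y : 'rV[R]_n) s t : vec y s t *m Kmx = vec (y *m B) (s * b + t) (s * a).
Proof.
rewrite /vec /Kmx !mul_row_block mul_row_col mul_mx_row !mulmx0 ?mul0mx.
rewrite !add0r !addr0 -!scalar_mxM mulr1 add_row_mx addr0 sc_add.
by [].
Qed.

Lemma vec_lin al be (y y' : 'rV[R]_n) s s' t t' :
  al *: vec y s t + be *: vec y' s' t' = vec (al *: y + be *: y') (al * s + be * s') (al * t + be * t').
Proof. by rewrite /vec !scale_row_mx !add_row_mx !scale_scalar_mx !sc_add. Qed.

Lemma KK x : x *m Kmx *m Kmx = a *: x + b *: (x *m Kmx).
Proof.
rewrite (vec_split x); move: (lsubmx _) (rsubmx _ 0 0) (rsubmx x 0 0) => y s t.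
rewrite !mulK vec_lin Hq; congr vec; ring.
Qed.

Lemma K_noeig x l : x != 0 -> x *m Kmx = l *: x -> False.
Proof.
move=> x0 E; have := KK x; rewrite E -scalemxAl E scalerA => h.
have : (l * l - a - b * l) *: x = 0.
  rewrite !scalerBl h.
  by apply/rowP => i; rewrite !mxE; ring.
move/eqP; rewrite scaler_eq0 (negbTE x0) orbF => /eqP h2.
clear h E Hq; have := sqr_ge0 (2 * l - b).
have -> : (2 * l - b) ^+ 2 = 4 * (l * l - a - b * l) + (b ^+ 2 + 4 * a) by ring.
rewrite h2 mulr0 add0r => H; by have := le_lt_trans H disc; rewrite ltxx.
Qed.

Definition wK x := x *m Kmx - dotv (x *m Kmx) (unitv x) *: unitv x.
Definition PhiK x := bivec (unitv x) (unitv (wK x)).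

Lemma wK_neq0 x : x != 0 -> wK x != 0.
Proof.
move=> x0; apply/eqP => E.
apply: (@K_noeig x (dotv (x *m Kmx) (unitv x) * (nrm x)^-1)) => //.
move/eqP: E; rewrite /wK subr_eq0 => /eqP E.
by rewrite {1}E {1}/unitv scalerA.
Qed.

Lemma PhiK_orth x : x != 0 -> orthonormal (unitv x) (unitv (wK x)).
Proof.
move=> x0; split; [exact: dotv_unitv | exact/dotv_unitv/wK_neq0 |].
have e : forall w, dotv (unitv x) (unitv w) = (nrm w)^-1 * dotv (unitv x) w.
  by move=> w; rewrite {2}/unitv dotvZr.
by rewrite e /wK orth_comp ?mulr0 // dotv_unitv.
Qed.

Lemma PhiK_scal x : x != 0 -> exists c, 0 < c /\ PhiK x = c *: bivec x (x *m Kmx).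
Proof.
move=> x0; exists ((nrm x)^-1 * (nrm (wK x))^-1); split.
  by rewrite mulr_gt0 // invr_gt0 nrm_gt0 // wK_neq0.
rewrite /PhiK {1}/unitv {1}/unitv bivecZl bivecZr scalerA /wK bivecDr bivecNr.
by rewrite /unitv !bivecZr bivec_xx !scaler0 subr0 mulrC.
Qed.

Lemma biv_comb x al be :
  bivec (al *: x + be *: (x *m Kmx)) ((al *: x + be *: (x *m Kmx)) *m Kmx) =
  (al ^+ 2 + al * be * b - a * be ^+ 2) *: bivec x (x *m Kmx).
Proof.
rewrite mulmxDl -!scalemxAl KK; move: (x *m Kmx) => X.
by apply/matrixP => i j; rewrite [in RHS]mxE !bivec_entry !mxE; ring.
Qed.

Lemma quadpos al be : (al != 0) || (be != 0) -> 0 < al ^+ 2 + al * be * b - a * be ^+ 2.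
Proof.
move=> h.
have e : 4 * (al ^+ 2 + al * be * b - a * be ^+ 2) = (2 * al + b * be) ^+ 2 - (b ^+ 2 + 4 * a) * be ^+ 2 by ring.
have h1 := sqr_ge0 (2 * al + b * be).
case/orP: h => h.
  have [be0|be0] := eqVneq be 0.
    rewrite be0 expr0n /= mulr0 mul0r mulr0 addr0 subr0.
    by rewrite lt_def sqrf_eq0 h sqr_ge0.
  have h2 : 0 < be ^+ 2 by rewrite lt_def sqrf_eq0 be0 sqr_ge0.
  have h3 : 0 < - (b ^+ 2 + 4 * a) * be ^+ 2 by rewrite mulr_gt0 // oppr_gt0.
  rewrite -(@pmulr_rgt0 _ 4) // e; rewrite mulNr in h3; lra.
have h2 : 0 < be ^+ 2 by rewrite lt_def sqrf_eq0 h sqr_ge0.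
have h3 : 0 < - (b ^+ 2 + 4 * a) * be ^+ 2 by rewrite mulr_gt0 // oppr_gt0.
rewrite -(@pmulr_rgt0 _ 4) // e; rewrite mulNr in h3; lra.
Qed.

Lemma PhiK_span x al be : x != 0 -> al *: x + be *: (x *m Kmx) != 0 ->
  PhiK (al *: x + be *: (x *m Kmx)) = PhiK x.
Proof.
move=> x0 y0.
have hab : (al != 0) || (be != 0).
  have [a0|] := eqVneq al 0; last by [].
  have [b0|] := eqVneq be 0; last by rewrite orbT.
  by move: y0; rewrite a0 b0 !scale0r addr0 eqxx.
have q0 := quadpos hab.
have [c1 [c1p E1]] := PhiK_scal y0.
have [c2 [c2p E2]] := PhiK_scal x0.
apply: (@biv_pos_eq _ _ _ _ _ _ (c1 * (al ^+ 2 + al * be * b - a * be ^+ 2) / c2)).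
- exact: PhiK_orth.
- exact: PhiK_orth.
- rewrite -/(PhiK _) -/(PhiK x) E1 biv_comb E2 !scalerA; congr (_ *: _).
  by field; exact: lt0r_neq0.
- by rewrite divr_gt0 // mulr_gt0.
Qed.

Lemma dotv_neq0 x : dotv x x = 1 -> x != 0.
Proof. by move=> h; apply/eqP => x0; move: h; rewrite x0 dotv0l => /eqP; rewrite eq_sym oner_eq0. Qed.

Lemma in_span_PhiK x y : x != 0 ->
  y = dotv y (unitv x) *: unitv x + dotv y (unitv (wK x)) *: unitv (wK x) ->
  exists al be, y = al *: x + be *: (x *m Kmx).
Proof.
move=> x0 ->.
set d1 := dotv y (unitv x); set d2 := dotv y (unitv (wK x)).
set k1 := (nrm x)^-1; set k2 := (nrm (wK x))^-1; set c := dotv (x *m Kmx) (unitv x).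
exists (d1 * k1 - d2 * k2 * c * k1), (d2 * k2).
rewrite /unitv -/k1 -/k2 /wK -/c /unitv -/k1; move: (x *m Kmx) => X.
by apply/rowP => i; rewrite !mxE; ring.
Qed.

Lemma ogc_unit (u v : V) t : orthonormal u v -> dotv (cos t *: u + sin t *: v) (cos t *: u + sin t *: v) = 1.
Proof.
case=> uu vv uv; rewrite !dotvDl !dotvDr !dotvZl !dotvZr uu vv uv (dotvC v u) uv.
by rewrite !mulr0 !mulr1 addr0 add0r -!expr2 cos2Dsin2.
Qed.

Lemma PhiK_fiber x y : dotv x x = 1 -> ogc_points (PhiK x) y -> PhiK y = PhiK x.
Proof.
move=> xx [u [v [t [Huv [E Ey]]]]].
have x0 := dotv_neq0 xx.
have Hy : y = dotv y (unitv x) *: unitv x + dotv y (unitv (wK x)) *: unitv (wK x).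
  apply: (ogc_span Huv (PhiK_orth x0)); first by rewrite -E.
  by exists t.
have [al [be Eab]] := in_span_PhiK x0 Hy.
have y0 : y != 0 by apply: dotv_neq0; rewrite Ey; exact: ogc_unit.
by rewrite Eab; apply: PhiK_span => //; rewrite -Eab.
Qed.

Lemma PhiK_cont x : x != 0 -> {for x, continuous PhiK}.
Proof.
move=> x0.
have hid : (fun y : V => y) @ nbhs x --> x := cvg_id.
have h1 : (fun y : V => unitv y) @ nbhs x --> unitv x by apply: cvg_unitv.
have hK : (fun y : V => y *m Kmx) @ nbhs x --> x *m Kmx.
  by apply: cvg_mulmx => //; exact: cvg_cst.
have hw : (fun y => y *m Kmx - dotv (y *m Kmx) (unitv y) *: unitv y) @ nbhs x --> wK x.
  have hd : (fun y : V => dotv (y *m Kmx) (unitv y)) @ nbhs x --> dotv (x *m Kmx) (unitv x).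
    by apply: cvg_dotv.
  have hZ : (fun y : V => dotv (y *m Kmx) (unitv y) *: unitv y) @ nbhs x -->
     dotv (x *m Kmx) (unitv x) *: unitv x by apply: cvgZ.
  exact: (cvgB hK hZ).
have hu2 : (fun y => unitv (wK y)) @ nbhs x --> unitv (wK x).
  by apply: cvg_unitv => //; exact: wK_neq0.
have H : (fun y => bivec (unitv y) (unitv (wK y))) @ nbhs x -->
  bivec (unitv x) (unitv (wK x)) by apply: cvg_bivec.
exact: H.
Qed.

Lemma PhiK_gcf : great_circle_fibration PhiK.
Proof.
split.
- apply: continuous_in_subspaceT => x; rewrite inE => sx.
  exact: PhiK_cont (dotv_neq0 sx).
- move=> x sx; have x0 := dotv_neq0 sx; split.
    by exists (unitv x), (unitv (wK x)); split => //; exact: PhiK_orth.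
  exists (unitv x), (unitv (wK x)), 0; split; first exact: PhiK_orth.
  split => //; rewrite cos0 sin0 scale1r scale0r addr0 /unitv /nrm.
  by rewrite [dotv x x]sx sqrtr1 invr1 scale1r.
- by move=> x y sx hy; exact: PhiK_fiber.
Qed.

Lemma lastc_vec (y : 'rV[R]_n) s t : lastc (vec y s t) = t.
Proof. by rewrite /lastc /vec row_mxKr mxE eqxx mulr1n. Qed.

Lemma lastcZ c x : lastc (c *: x) = c * lastc x.
Proof. by rewrite /lastc linearZ mxE. Qed.

Lemma line_pt_vec (y : 'rV[R]_n) : line_pt y = vec y 0 1.
Proof.
rewrite /line_pt /vec; congr row_mx; first congr row_mx.
  by apply/rowP => i; rewrite ord1 !mxE.
by apply/rowP => i; rewrite ord1 !mxE.
Qed.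

Lemma line_dir_vec (y : 'rV[R]_n) : line_dir B y = vec (y *m B) 1 0.
Proof.
rewrite /line_dir /vec; congr row_mx; first congr row_mx.
  by apply/rowP => i; rewrite ord1 !mxE.
by apply/rowP => i; rewrite ord1 !mxE.
Qed.

Lemma line_pt_neq0 (y : 'rV[R]_n) : line_pt y != 0.
Proof.
apply/eqP => h; have := congr1 (@lastc R (n + 1)) h.
rewrite line_pt_vec lastc_vec /lastc linear0 mxE => /eqP; by rewrite oner_eq0.
Qed.

Lemma line_ptK (y : 'rV[R]_n) : line_pt y *m Kmx = line_dir B y.
Proof. by rewrite line_pt_vec line_dir_vec mulK mul0r add0r mul0r. Qed.

Lemma PhiK_line (y : 'rV[R]_n) :
  exists c, 0 < c /\ PhiK (line_pt y) = c *: line_biv B y.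
Proof.
have [c [c0 E]] := PhiK_scal (line_pt_neq0 y).
by exists c; split => //; rewrite E line_ptK.
Qed.

Lemma PhiK_corr : corresponds_to_gcf B.
Proof.
exists PhiK; split; first exact: PhiK_gcf.
- move=> x sx [z [hz up]].
  have zx := PhiK_fiber sx hz.
  have z0 : z != 0.
    case: hz => [u [v [t [Huv [_ Ez]]]]]; apply: dotv_neq0; rewrite Ez; exact: ogc_unit.
  move: up; rewrite /upper.
  have Ez := vec_split z.
  move: Ez; move: (lsubmx (lsubmx z)) (rsubmx (lsubmx z) 0 0) => y0 s Ez.
  rewrite Ez lastc_vec => tpos.
  set t := rsubmx z 0 0 in Ez tpos.
  set D := s * s * a - t * (s * b + t).
  have Dneg : D < 0.
    have := @quadpos t s; rewrite (lt0r_neq0 tpos) => /(_ isT) h.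
    rewrite /D; have -> : s * s * a - t * (s * b + t) = - (t ^+ 2 + t * s * b - a * s ^+ 2) by ring.
    by rewrite oppr_lt0.
  have D0 : D != 0 by exact: ltr0_neq0.
  set al := - (s * b + t) / D; set be := s / D.
  set y := al *: y0 + be *: (y0 *m B).
  have Ep : al *: z + be *: (z *m Kmx) = line_pt y.
    rewrite Ez mulK vec_lin line_pt_vec; congr vec; rewrite /al /be /D; field => //.
  have [c [c0 Ec]] := PhiK_line y.
  exists y; exists c; split => //.
  have Pz : PhiK (line_pt y) = PhiK z by rewrite -Ep PhiK_span // Ep line_pt_neq0.
  by rewrite -zx -Pz Ec.
- move=> y; set p := line_pt y; have p0 : p != 0 := line_pt_neq0 y.
  have sx : sphere (unitv p) := dotv_unitv p0.
  have Ex : unitv p = (nrm p)^-1 *: p + 0 *: (p *m Kmx) by rewrite scale0r addr0.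
  have Px : PhiK (unitv p) = PhiK p by rewrite {1}Ex; apply: PhiK_span => //; rewrite -Ex unitv_neq0.
  exists (unitv p); split => //.
    exists (unitv p); split.
      by have [_ H2 _] := PhiK_gcf; case: (H2 _ sx).
    rewrite /upper /unitv lastcZ /p line_pt_vec lastc_vec mulr1 invr_gt0.
    by rewrite -line_pt_vec; exact: (nrm_gt0 p0).
  have [c [c0 Ec]] := PhiK_line y.
  by exists c; split => //; rewrite Px.
Qed.

End KPhi.
Section Fwd.
Variable R : realType.
Variable n : nat.
Variable B : 'M[R]_n.
Hypothesis hB : no_real_eigenvalue B.
Local Notation V := ('rV[R]_(n + 1 + 1)).

Lemma vec_inj (y y' : 'rV[R]_n) s s' t t' : vec y s t = vec y' s' t' -> y = y'.
Proof. by rewrite /vec => /eq_row_mx [/eq_row_mx [-> _] _]. Qed.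

Lemma vecZ c (y : 'rV[R]_n) s t : c *: vec y s t = vec (c *: y) (c * s) (c * t).
Proof. by rewrite /vec !scale_row_mx !scale_scalar_mx. Qed.

Lemma vecD (y y' : 'rV[R]_n) s s' t t' : vec y s t + vec y' s' t' = vec (y + y') (s + s') (t + t').
Proof. by rewrite /vec !add_row_mx !sc_add. Qed.

Lemma vecN (y : 'rV[R]_n) s t : - vec y s t = vec (- y) (- s) (- t).
Proof. by rewrite -scaleN1r vecZ scaleN1r !mulN1r. Qed.

Lemma dotv_vec (y y' : 'rV[R]_n) s s' t t' :
  dotv (vec y s t) (vec y' s' t') = dotv y y' + s * s' + t * t'.
Proof.
rewrite !dotvE big_split_ord /= big_split_ord /= !big_ord1.
rewrite /vec !(row_mxEl, row_mxEr) !mxE !eqxx !mulr1n.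
by congr (_ + _ + _); apply: eq_bigr => i _; rewrite !row_mxEl.
Qed.

Lemma vec_eq0 (y : 'rV[R]_n) s t : vec y s t = 0 -> y = 0.
Proof.
move=> h; have : vec y s t = vec 0 0 0 by rewrite h /vec !raddf0 !row_mx0.
exact: vec_inj.
Qed.

Lemma vec_neq0 (y : 'rV[R]_n) s t : y != 0 -> vec y s t != 0.
Proof.
move=> y0; apply/eqP => h; move/eqP: y0; apply.
have : vec y s t = vec 0 0 0 by rewrite h /vec !raddf0 !row_mx0.
exact: vec_inj.
Qed.

Lemma eig_contra' (v : 'rV[R]_n) (l : R) : v != 0 -> v *m B = l *: v -> False.
Proof. by move=> v0 E; apply: (@hB l); apply/eigenvalueP; exists v. Qed.

Lemma G0_neq0 (u : 'rV[R]_n) : u != 0 -> bivec (vec u 0 0) (vec (u *m B) 0 0) != 0.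
Proof.
move=> u0; apply/eqP => h.
have := congr1 (fun M => vec u 0 0 *m M) h; rewrite /= mulmx0 bivec_act !dotv_vec.
rewrite !vecZ vecN vecD => /vec_eq0 e.
rewrite !mulr0 !addr0 in e.
have uu := dotv_gt0 u0.
apply: (@eig_contra' u (dotv u (u *m B) / dotv u u)) => //.
apply: (@scalerI _ _ (dotv u u)); first by rewrite lt0r_neq0.
move/eqP: e; rewrite subr_eq0 => /eqP ->; rewrite scalerA; congr (_ *: _).
by field; rewrite lt0r_neq0.
Qed.

Lemma limit_lemma (Phi : V -> 'M[R]_(n + 1 + 1)) : great_circle_fibration Phi ->
  (forall y : 'rV[R]_n, exists x, [/\ sphere x, (exists z, ogc_points (Phi x) z /\ upper z)
     & same_oplane (Phi x) (line_biv B y)]) ->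
  forall u : 'rV[R]_n, u != 0 ->
  exists c, 0 < c /\ Phi (unitv (vec u 0 0)) = c *: bivec (vec u 0 0) (vec (u *m B) 0 0).
Proof.
move=> [hc h2 h3] hl u u0.
pose q := fun r : R => vec u 0 r.
pose d := fun r : R => vec (u *m B) r 0.
pose G := fun r => bivec (q r) (d r).
pose X := fun r => unitv (q r).
have q0 : forall r, q r != 0 := fun r => vec_neq0 _ _ u0.
have sX : forall r, sphere (X r) := fun r => dotv_unitv (q0 r).
have factA : forall r, 0 < r -> exists c, 0 < c /\ Phi (X r) = c *: G r.
  move=> r r0; set y := r^-1 *: u.
  have [x' [sx' _ [c' [c'0 E']]]] := hl y.
  have Hp : line_pt y = r^-1 *: q r.
    by rewrite line_pt_vec /q vecZ mulr0 mulVf // lt0r_neq0.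
  have Hd : line_dir B y = r^-1 *: d r.
    by rewrite line_dir_vec /d vecZ mulr0 mulVf ?lt0r_neq0 // /y -scalemxAl.
  have [[u1 [v1 [Huv E1]]] _] := h2 x' sx'.
  have og : ogc_points (Phi x') (unitv (line_pt y)).
    rewrite E1; apply: (span_from_biv (b := line_dir B y) (c := c') Huv _ (line_pt_neq0 y)).
    by rewrite -E1 E'.
  have := h3 _ _ sx' og; rewrite Hp unitvZ ?invr_gt0 // -/(X r) => ->.
  exists (c' * (r^-1 * r^-1)); split; first by rewrite !mulr_gt0 ?invr_gt0.
  by rewrite E' /line_biv Hp Hd bivecZl bivecZr !scalerA mulrA.
have hq : q r @[r --> at_right (0:R)] --> q 0.
  apply: cvg_at_right_filter.
  have eq_q : forall r, q r = vec u 0 0 + r *: vec 0 0 1.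
    by move=> r; rewrite /q vecZ vecD scaler0 addr0 mulr0 addr0 mulr1 add0r.
  rewrite (eq_cvg _ _ eq_q) (eq_q 0) scale0r addr0.
  have h : (fun r : R => vec u 0 0 + r *: vec 0 0 1) @ nbhs (0:R) --> vec u 0 0 + 0 *: vec 0 0 1.
    apply: cvgD; first exact: cvg_cst.
    by apply: cvgZ; [exact: cvg_id | exact: cvg_cst].
  by rewrite scale0r addr0 in h.
have hd : d r @[r --> at_right (0:R)] --> d 0.
  apply: cvg_at_right_filter.
  have eq_d : forall r, d r = vec (u *m B) 0 0 + r *: vec 0 1 0.
    by move=> r; rewrite /d vecZ vecD scaler0 addr0 mulr0 mulr1 addr0 add0r.
  rewrite (eq_cvg _ _ eq_d) (eq_d 0) scale0r addr0.
  have h : (fun r : R => vec (u *m B) 0 0 + r *: vec 0 1 0) @ nbhs (0:R) --> vec (u *m B) 0 0 + 0 *: vec 0 1 0.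
    apply: cvgD; first exact: cvg_cst.
    by apply: cvgZ; [exact: cvg_id | exact: cvg_cst].
  by rewrite scale0r addr0 in h.
have hX : X r @[r --> at_right (0:R)] --> X 0 by apply: cvg_unitv.
have hG : G r @[r --> at_right (0:R)] --> G 0 by apply: cvg_bivec.
have hcX := (subspace_continuousP _ Phi).1 hc (X 0) (sX 0).
have hXw : X @ at_right (0:R) `=>` within (@sphere R (n + 1 + 1)) (nbhs (X 0)).
  move=> W hW.
  have H : at_right (0:R) [set r | sphere (X r) -> W (X r)] := hX _ hW.
  suff : at_right (0:R) [set r | W (X r)] by [].
  by apply: filterS H => r /=; apply; exact: sX.
have hPhi : (Phi \o X) @ at_right (0:R) --> Phi (X 0) := cvg_comp X Phi hXw hcX.
have G00 : G 0 != 0 := G0_neq0 u0.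
have hR : (fun r => (`|Phi (X r)| / `|G r|) *: G r) @ at_right (0:R) -->
    (`|Phi (X 0)| / `|G 0|) *: G 0.
  apply: cvgZ => //; apply: cvgM; first exact: cvg_norm.
  by apply: cvgV; [rewrite normr_eq0 | exact: cvg_norm].
have hev : {near at_right (0:R), (fun r => (`|Phi (X r)| / `|G r|) *: G r) =1 Phi \o X}.
  near=> r; have r0 : 0 < r by near: r; exact: nbhs_right_gt.
  have [c [c0 Ec]] := factA r r0.
  have Gr0 : G r != 0.
    apply/eqP => g0; have [[u1 [v1 [Huv E1]]] _] := h2 _ (sX r).
    by move: (orth_biv_neq0 Huv); rewrite -E1 Ec g0 scaler0 eqxx.
  rewrite /= Ec normrZ gtr0_norm // -mulrA mulfV ?normr_eq0 // mulr1.
  by [].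
have h1 : (Phi \o X) @ at_right (0:R) --> (`|Phi (X 0)| / `|G 0|) *: G 0.
  exact: cvg_trans (near_eq_cvg hev) hR.
have E0 := cvg_unique _ hPhi h1.
exists (`|Phi (X 0)| / `|G 0|); split; last exact: E0.
have [[u1 [v1 [Huv E1]]] _] := h2 _ (sX 0).
rewrite divr_gt0 // normr_gt0 // E1; exact: orth_biv_neq0.
Unshelve. all: by end_near.
Qed.

End Fwd.
Section Quad.
Variable R : realType.
Variable n : nat.
Variable B : 'M[R]_n.
Hypothesis hB : no_real_eigenvalue B.
Implicit Types (u v w : 'rV[R]_n).

Lemma eig_contra v (l : R) : v != 0 -> v *m B = l *: v -> False.
Proof. by move=> v0 E; apply: (@hB l); apply/eigenvalueP; exists v. Qed.

Lemma indep u (c d : R) : u != 0 -> c *: u + d *: (u *m B) = 0 -> c = 0 /\ d = 0.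
Proof.
move=> u0 E; have [d0|d0] := eqVneq d 0.
  move: E; rewrite d0 scale0r addr0 => /eqP; rewrite scaler_eq0 (negbTE u0) orbF.
  by move/eqP.
exfalso; apply: (@eig_contra u (- c / d)) => //.
have E2 : d *: (u *m B) = - (c *: u) by apply/eqP; rewrite -subr_eq0 opprK addrC E.
apply: (@scalerI _ _ d) => //.
by rewrite E2 scalerA -scaleNr; congr (_ *: _); field.
Qed.

Definition Q (a b : R) u := u *m B *m B - a *: u - b *: (u *m B).

Lemma Q0 a b : Q a b 0 = 0.
Proof. by rewrite /Q !mul0mx !scaler0 !subr0. Qed.

Lemma QD a b u w : Q a b (u + w) = Q a b u + Q a b w.
Proof.
rewrite /Q !mulmxDl; move: (u *m B *m B) (w *m B *m B) (u *m B) (w *m B) => X Y Z T.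
by apply/rowP => i; rewrite !mxE; ring.
Qed.

Lemma QN a b u : Q a b (- u) = - Q a b u.
Proof.
rewrite /Q !mulNmx; move: (u *m B *m B) (u *m B) => X Z.
by apply/rowP => i; rewrite !mxE; ring.
Qed.

Lemma Q_diff a b a' b' u : Q a b u - Q a' b' u = (a' - a) *: u + (b' - b) *: (u *m B).
Proof.
rewrite /Q; move: (u *m B *m B) (u *m B) => X Z.
by apply/rowP => i; rewrite !mxE; ring.
Qed.

Lemma coef_uniq u a b a' b' : u != 0 -> Q a b u = 0 -> Q a' b' u = 0 -> a = a' /\ b = b'.
Proof.
move=> u0 H1 H2; have := Q_diff a b a' b' u; rewrite H1 H2 subrr => /esym.
by move/(indep u0) => [h1 h2]; split; apply/eqP; rewrite eq_sym -subr_eq0; apply/eqP.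
Qed.

Lemma Q_span u a b al be : Q a b u = 0 -> Q a b (al *: u + be *: (u *m B)) = 0.
Proof.
move=> H.
have -> : Q a b (al *: u + be *: (u *m B)) = al *: Q a b u + be *: (Q a b u *m B).
  rewrite /Q !(mulmxDl, mulNmx) -!scalemxAl.
  move: (u *m B *m B *m B) (u *m B *m B) (u *m B) => X Y Z.
  by apply/rowP => i; rewrite !mxE; ring.
by rewrite H mul0mx !scaler0 addr0.
Qed.

Lemma coef_of u : invariant_on_planes B -> u != 0 -> exists a b, Q a b u = 0.
Proof.
move=> hinv u0; have /submxP [D E] := hinv u u0.
rewrite -[D]hsubmxK mul_row_col [lsubmx D]mx11_scalar [rsubmx D]mx11_scalar in E.
rewrite !mul_scalar_mx in E.
exists (lsubmx D 0 0), (rsubmx D 0 0).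
by rewrite /Q E; move: (u *m B) => X; apply/rowP => i; rewrite !mxE; ring.
Qed.

Lemma coef_const u w a1 b1 a2 b2 : invariant_on_planes B -> u != 0 -> w != 0 ->
  Q a1 b1 u = 0 -> Q a2 b2 w = 0 -> a1 = a2 /\ b1 = b2.
Proof.
move=> hinv u0 w0 H1 H2.
have [uw|uw] := eqVneq (u + w) 0.
  have ew : w = - u by apply/eqP; rewrite -addr_eq0 addrC uw.
  apply: (coef_uniq u0 H1).
  by apply/eqP; rewrite -oppr_eq0 -QN -ew H2.
have [a3 [b3 H3]] := coef_of hinv uw.
set v := Q a3 b3 u.
have hv : v = (a1 - a3) *: u + (b1 - b3) *: (u *m B).
  by rewrite /v -Q_diff H1 subr0.
have Hw3 : Q a3 b3 w = - v by apply/eqP; rewrite -addr_eq0 addrC /v -QD H3.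
have hv' : - v = (a2 - a3) *: w + (b2 - b3) *: (w *m B).
  by rewrite -Hw3 -Q_diff H2 subr0.
have [v0|v0] := eqVneq v 0.
  have Hu : Q a3 b3 u = 0 by [].
  have Hw : Q a3 b3 w = 0 by rewrite Hw3 v0 oppr0.
  have [-> ->] := coef_uniq u0 H1 Hu.
  by have [-> ->] := coef_uniq w0 H2 Hw.
have Hv1 : Q a1 b1 v = 0 by rewrite hv; apply: Q_span.
have Hv2 : Q a2 b2 v = 0.
  by apply/eqP; rewrite -oppr_eq0 -QN hv'; apply/eqP; apply: Q_span.
exact: coef_uniq v0 Hv1 Hv2.
Qed.

Lemma quad_rel : invariant_on_planes B ->
  exists a b : R, (forall u, u *m B *m B = a *: u + b *: (u *m B)) /\ b ^+ 2 + 4 * a < 0.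
Proof.
move=> hinv.
have [n0|npos] := posnP n.
  exists (-1), 0; split; last by lra.
  by move=> u; apply/rowP => i; have := ltn_ord i; rewrite {2}n0.
set u0 : 'rV[R]_n := const_mx 1.
have u00 : u0 != 0.
  by apply/eqP => /rowP /(_ (Ordinal npos)); rewrite !mxE => /eqP; rewrite oner_eq0.
have [a [b H0]] := coef_of hinv u00.
have Hall : forall u, Q a b u = 0.
  move=> u; have [->|uu] := eqVneq u 0; first exact: Q0.
  have [a' [b' H']] := coef_of hinv uu.
  by have [-> ->] := coef_const hinv u00 uu H0 H'.
have Hq : forall u, u *m B *m B = a *: u + b *: (u *m B).
  by move=> u; apply/eqP; rewrite -subr_eq0 opprD addrA; apply/eqP; exact: Hall.
exists a, b; split => //.
rewrite ltNge; apply/negP => D.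
set sd := Num.sqrt (b ^+ 2 + 4 * a).
have sd2 : sd ^+ 2 = b ^+ 2 + 4 * a by rewrite sqr_sqrtr.
set r := (b + sd) / 2; set s := (b - sd) / 2.
have hb : b = r + s by rewrite /r /s; field.
have ha : a = - (r * s) by rewrite /r /s; nra.
have [v0|v0] := eqVneq (u0 *m B - s *: u0) 0.
  apply: (@eig_contra u0 s) => //; apply/eqP; rewrite -subr_eq0; exact/eqP.
apply: (@eig_contra _ r v0).
rewrite mulmxBl -scalemxAl Hq; move: (u0 *m B) => X.
by apply/rowP => i; rewrite !mxE ha hb; ring.
Qed.

End Quad.
Theorem proposition6p3 (R : realType) (m : nat) (B : 'M[R]_(2 * m)) :
  no_real_eigenvalue B ->
  (corresponds_to_gcf B <-> invariant_on_planes B).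
Proof.
move=> hB; split; last first.
  move=> hinv; have [a [b [Hq disc]]] := quad_rel hB hinv.
  exact: (PhiK_corr Hq disc).
move=> [Phi [hg h2c h3c]] u u0.
set v := u *m B.
have v0 : v != 0.
  apply/eqP => h; apply: (@eig_contra' _ _ _ hB u 0 u0).
  by rewrite -/v h scale0r.
have [c1 [c1p E1]] := limit_lemma hB hg h3c u0.
have [c2 [c2p E2]] := limit_lemma hB hg h3c v0.
have sX0 : sphere (unitv (vec u 0 0)) := dotv_unitv (vec_neq0 _ _ u0).
have [_ hg2 hg3] := hg.
have [[u1 [v1 [Huv Eo]]] _] := hg2 _ sX0.
have og : ogc_points (Phi (unitv (vec u 0 0))) (unitv (vec v 0 0)).
  rewrite Eo; apply: (span_from_biv (b := vec u 0 0) (c := - c1) Huv _ (vec_neq0 _ _ v0)).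
  by rewrite -Eo E1 bivecC scalerN scaleNr.
have Eq := hg3 _ _ sX0 og.
rewrite E1 E2 in Eq.
have := congr1 (fun M => vec v 0 0 *m M) Eq.
rewrite /= -!scalemxAr !bivec_act !dotv_vec !mulr0 !addr0.
rewrite !vecZ !vecN !vecD !vecZ => /vec_inj e.
have A0 := dotv_gt0 v0.
apply/submxP; exists (row_mx ((- c1 / c2)%:M) (((c1 * dotv v u + c2 * dotv v (v *m B)) / (c2 * dotv v v))%:M)).
rewrite mul_row_col !mul_scalar_mx -/v.
rewrite -/v in e.
move: e; move: (dotv v u) (dotv v (v *m B)) (dotv v v) A0 => C Bc A A0.
clearbody v; move: (v *m B) => W e.
apply: (@scalerI _ _ (c2 * A)); first by rewrite mulf_neq0 // lt0r_neq0.
apply/rowP => i; have := congr1 (fun w : 'rV[R]_(2 * m) => w 0 i) e; rewrite !mxE => h.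
have h' : c2 * A * W 0 i = - c1 * A * u 0 i + (c1 * C + c2 * Bc) * v 0 i.
  apply/eqP; rewrite -subr_eq0.
  have -> : c2 * A * W 0 i - (- c1 * A * u 0 i + (c1 * C + c2 * Bc) * v 0 i) =
    c2 * (A * W 0 i + - (Bc * v 0 i)) - c1 * (C * v 0 i + - (A * u 0 i)) by ring.
  by rewrite h subrr.
rewrite h'; field.
by rewrite !lt0r_neq0.
Qed.
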